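(* Let $\tau_0,\tau_1,\tau_2>0$, let $0<\alpha\le 1$, and let $a\in\mathcal{B}_\alpha$. Let $A=\mathrm{CC}(a)$ and $B=e_n$. Then $$\sum_{k=0}^{\infty}\|\alpha^{-k}A^kB\|^2\le 2\pi n\,\alpha^{-2n}/\tau_1^2,$$ and for every $k\ge0$, $$\|A^kB\|^2\le\min\left\{2\pi n/\tau_1^2,\ 2\pi n\,\alpha^{2k-2n}/\tau_1^2\right\}.$$
   Context: $\mathcal{C}=\{z\in\mathbb{C}:\Re z\ge(1+\tau_0)|\Im z|\}\cap\{z\in\mathbb{C}:\tau_1<\Re z<\tau_2\}$; for $a=(a_1,\dots,a_n)\in\mathbb{R}^n$, $p_a(z)=z^n+a_1z^{n-1}+\dots+a_n$; $\mathcal{B}_\alpha=\{a\in\mathbb{R}^n:\ p_a(z)/z^n\in\mathcal{C}\text{ for all } |z|=\alpha\}$. $\mathrm{CC}(a)$ is the $n\times n$ companion matrix with ones on the superdiagonal, zeros elsewhere in the first $n-1$ rows, and last row $[-a_n,\dots,-a_1]$; $e_n$ is the $n$-th standard basis vector; $\|\cdot\|$ is the Euclidean norm. *)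

(* Defs.v *)
From HB Require Import structures.
From mathcomp Require Import all_boot all_order all_algebra.
From mathcomp Require Import all_classical all_reals all_analysis.
From mathcomp Require Import complex.

Set Implicit Arguments.
Unset Strict Implicit.
Unset Printing Implicit Defensive.

Import Order.TTheory GRing.Theory Num.Theory.
Local Open Scope ring_scope.

Definition setC (R : realType) (tau0 tau1 tau2 : R) (w : R[i]) : Prop :=
  (1 + tau0) * `|complex.Im w| <= complex.Re w /\ tau1 < complex.Re w /\ complex.Re w < tau2.

(* a = (a_1, ..., a_n) is encoded as a : 'rV_n with a 0 i = a_(i+1). *)
Definition p_a (R : realType) (n : nat) (a : 'rV[R]_n) (z : R[i]) : R[i] :=
  z ^+ n + \sum_(i < n) ((a 0 i)%:C)%C * z ^+ (n - i.+1).

Definition B_alpha (R : realType) (tau0 tau1 tau2 alpha : R) (n : nat)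
  (a : 'rV[R]_n) : Prop :=
  forall z : R[i], `|z| = (alpha%:C)%C -> setC tau0 tau1 tau2 (p_a a z / z ^+ n).

Definition CC (R : realType) (n : nat) (a : 'rV[R]_n) : 'M[R]_n :=
  \matrix_(i < n, j < n)
     if i.+1 == n then - a 0 (rev_ord j)
     else (j == i.+1 :> nat)%:R.

(* n-th standard basis (column) vector of R^n (n >= 1, dimension n.+1). *)
Definition e_last (R : realType) (n : nat) : 'cV[R]_n.+1 :=
  delta_mx ord_max 0.

Definition enorm (R : realType) (n : nat) (v : 'cV[R]_n) : R :=
  Num.sqrt (\sum_(i < n) v i 0 ^+ 2).

(* Main.v *)
Set Warnings "-all".
Require Import Defs.
From HB Require Import structures.
From mathcomp Require Import all_boot all_order all_algebra all_field.
From mathcomp Require Import all_classical all_reals all_analysis.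
From mathcomp Require Import complex ring lra zify.
Import Order.TTheory GRing.Theory Num.Theory.
Local Open Scope ring_scope.

Lemma dvd_e M K L i k j : (K + L <= M)%N -> (i < K)%N -> (k < L)%N -> (j < L)%N ->
  (M %| k + M.-1 * (i + j))%N = (k == i + j).
Proof.
case: M => [|p] HM Hi Hk Hj; first lia.
have Ms : (i + j < p.+1)%N by lia.
have Mk : (k < p.+1)%N by lia.
rewrite /dvdn -(mod0n p.+1) -(eqn_modDr (i + j)) add0n -addnA /=.
have -> : (p * (i + j) + (i + j) = (i+j) * p.+1)%N by lia.
by rewrite addnC modnMDl !modn_small.
Qed.
Section Aux.
Variable R : realType.
Local Notation C := R[i].
Local Open Scope complex_scope.

Lemma prim_exists (M : nat) : (0 < M)%N -> {z : C | M.-primitive_root z}.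
Proof.
pose p : {poly C} := 'X^M - 1; have [r Dp] := closed_field_poly_normal p.
move=> n_gt0; apply/sigW; rewrite (monicP _) ?monicXnsubC // scale1r in Dp.
have rn1: all M.-unity_root r by apply/allP=> z; rewrite -root_prod_XsubC -Dp.
have sz_r: (M < (size r).+1)%N.
  by rewrite -(size_prod_XsubC r id) -Dp size_XnsubC.
have [|z] := hasP (cyclic.has_prim_root n_gt0 rn1 _ sz_r); last by exists z.
by rewrite -separable_prod_XsubC -Dp separable_Xn_sub_1 // pnatr_eq0 -lt0n.
Qed.

Lemma norm_prim (M : nat) (z : C) : (0 < M)%N -> M.-primitive_root z -> `|z| = 1.
Proof.
move=> M0 pz; have : `|z| ^+ M = 1 by rewrite -normrX prim_expr_order // normr1.
by move/eqP; rewrite pexpr_eq1 // => /eqP.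
Qed.

Lemma conj_prim (M : nat) (z : C) : (0 < M)%N -> M.-primitive_root z ->
  conjc z = z ^+ M.-1.
Proof.
move=> M0 pz.
have zz : z * conjc z = 1 by rewrite -sqr_normc (@norm_prim M z M0 pz) expr1n.
have : z ^+ M = 1 by rewrite prim_expr_order.
case: M M0 pz => [//|p] _ pz; rewrite exprS /= => zp.
by rewrite -[LHS]mul1r -zp mulrAC zz mul1r.
Qed.

Lemma geo_prim (M : nat) (z : C) d : M.-primitive_root z ->
  \sum_(l < M) (z ^+ d) ^+ l = if (M %| d)%N then M%:R else 0.
Proof.
move=> pz; case: ifP => H.
  have -> : z ^+ d = 1 by apply/eqP; rewrite -(prim_order_dvd pz).
  by rewrite (eq_bigr (fun _ => 1)) ?sumr_const ?card_ord // => l _; rewrite expr1n.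
have w1 : z ^+ d != 1 by rewrite -(prim_order_dvd pz) H.
have : (z ^+ d - 1) * \sum_(l < M) (z ^+ d) ^+ l = 0.
  by rewrite -subrX1 exprAC (prim_expr_order pz) expr1n subrr.
by move/eqP; rewrite mulf_eq0 subr_eq0 (negPf w1) /= => /eqP.
Qed.

End Aux.
Section Fourier.
Variable R : realType.
Local Notation C := R[i].
Local Open Scope complex_scope.

Lemma cj (u : C) : Num.conj u = conjc u. Proof. by []. Qed.
Lemma cjr (r : R) : conjc (r%:C) = r%:C.
Proof. by apply/eqP; rewrite eq_complex /= oppr0 !eqxx. Qed.

Definition Pc (K : nat) (b : nat -> R) (v : C) : C := \sum_(i < K) (b i)%:C * v ^+ i.

Lemma fourier M K L (z : C) (b x : nat -> R) : (0 < M)%N -> M.-primitive_root z ->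
  (K + L <= M)%N ->
  \sum_(l < M) Pc K b (conjc (z ^+ l)) * (Pc L x (z ^+ l) * conjc (Pc L x (z ^+ l))) =
  M%:R * (\sum_(i < K) \sum_(k < L) \sum_(j < L)
             (if (k == (i + j)%N :> nat) then b i * x k * x j else 0))%:C.
Proof.
move=> M0 pz HKL.
have step : forall l : 'I_M,
  Pc K b (conjc (z ^+ l)) * (Pc L x (z ^+ l) * conjc (Pc L x (z ^+ l))) =
  \sum_(i < K) \sum_(k < L) \sum_(j < L)
     (b i * x k * x j)%:C * ((z ^+ (k + M.-1 * (i + j))) ^+ l).
  move=> l; set w := z ^+ l.
  have wc : conjc w = w ^+ M.-1.
    by rewrite /w rmorphXn /= ?cj (@conj_prim R M z M0 pz) exprAC.
  rewrite /Pc rmorph_sum /= ?cj wc big_distrl /=; apply eq_bigr => i _.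
  rewrite big_distrl big_distrr /=; apply eq_bigr => k _.
  rewrite big_distrr big_distrr /=; apply eq_bigr => j _.
  rewrite rmorphM rmorphXn /= oppr0 complexr0 ?cj wc [in RHS]exprAC -/w exprD exprM exprD !rmorphM /=.
  ring.
rewrite (eq_bigr _ (fun l _ => step l)) exchange_big rmorph_sum big_distrr /=.
apply eq_bigr => i _.
rewrite exchange_big rmorph_sum big_distrr; apply eq_bigr => k _.
rewrite exchange_big rmorph_sum big_distrr; apply eq_bigr => j _.
rewrite -big_distrr /= (@geo_prim R M z) // (@dvd_e M K L i k j HKL) //.
by case: eqP => _; [rewrite mulrC | rewrite mulr0 rmorph0 mulr0].
Qed.

End Fourier.
Arguments Pc {R}.
Section Toep.
Variable R : realType.
Local Notation C := R[i].
Local Open Scope complex_scope.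

Lemma ReD (a b : C) : complex.Re (a + b) = complex.Re a + complex.Re b.
Proof. by case: a; case: b. Qed.
Lemma Re0 : complex.Re (0 : C) = 0. Proof. by []. Qed.
Lemma ReSum (M : nat) (f : 'I_M -> C) :
  complex.Re (\sum_(l < M) f l) = \sum_(l < M) complex.Re (f l).
Proof. exact: (big_morph _ ReD Re0). Qed.

Lemma ReMn (u X : C) :
  complex.Re (u * (X * conjc X)) = complex.Re u * complex.Re (X * conjc X).
Proof. case: u => u1 u2; case: X => a b /=; ring. Qed.

Lemma Ren_ge0 (X : C) : 0 <= complex.Re (X * conjc X).
Proof. case: X => a b /=; nra. Qed.

Lemma toeplitz K L (b x : nat -> R) (t : R) :
  (forall v : C, `|v| = 1 -> t <= complex.Re (Pc K b v)) ->
  t * \sum_(k < L) x k ^+ 2 <=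
  \sum_(i < K) \sum_(k < L) \sum_(j < L)
     (if (k == (i + j)%N :> nat) then b i * x k * x j else 0).
Proof.
move=> Hv.
pose M := (K + L).+1.
have M0 : (0 < M)%N by [].
have [z pz] := @prim_exists R M M0.
have F1 := @fourier R M K L z b x M0 pz (leqnSn _).
have F0 := @fourier R M 1 L z (fun i => (i == 0%N)%:R) x M0 pz ltac:(rewrite /M; lia).
have E0 : \sum_(i < 1) \sum_(k < L) \sum_(j < L)
     (if (k == (i + j)%N :> nat) then ((i : nat) == 0%N)%:R * x k * x j else 0) =
     \sum_(k < L) x k ^+ 2.
  rewrite big_ord1; apply eq_bigr => k _.
  rewrite (bigD1 k) //= eqxx mul1r -expr2 big1 ?addr0 // => j /negP Hjk.
  rewrite add0n; case: eqP => // /val_inj E.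
  by case: Hjk; rewrite E.
rewrite E0 in F0.
have P0 : forall l : 'I_M, Pc 1 (fun i => (i == 0%N)%:R) (conjc (z ^+ l)) = 1.
  by move=> l; rewrite /Pc big_ord1 /= expr0 mulr1.
have ReMC : forall r : R, complex.Re ((M%:R : C) * r%:C) = M%:R * r.
  by move=> r; rewrite -(rmorph_nat (real_complex R)) -rmorphM.
have := congr1 (@complex.Re R) F1; rewrite ReMC ReSum => E1.
have := congr1 (@complex.Re R) F0; rewrite ReMC ReSum.
under eq_bigr do rewrite P0 mul1r.
move=> E2.
have H : M%:R * (t * \sum_(k < L) x k ^+ 2) <= M%:R *
  \sum_(i < K) \sum_(k < L) \sum_(j < L)
     (if (k == (i + j)%N :> nat) then b i * x k * x j else 0).
  rewrite -E1 mulrCA -E2 mulr_sumr; apply: ler_sum => l _.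
  rewrite ReMn ler_wpM2r ?Ren_ge0 //; apply: Hv.
  by rewrite normcJ normrX (@norm_prim R M z M0 pz) expr1n.
by rewrite ler_pM2l ?ltr0n in H.
Qed.

End Toep.
Section Mat.
Variable R : realType.
Variable n : nat.
Variable a : 'rV[R]_n.+1.

Definition g (m : nat) : R :=
  if (m <= n)%N then (m == n)%:R else (CC a ^+ (m - n) *m e_last R n) ord_max 0.

Lemma entries k (i : 'I_n.+1) : (CC a ^+ k *m e_last R n) i 0 = g (k + i).
Proof.
elim: k i => [|k IH] i.
  rewrite expr0 mul1mx /e_last mxE /g add0n.
  have := ltn_ord i; rewrite ltnS => ->.
  by rewrite andbT.
case: (ltnP i n) => Hi.
  have Hi' : (i.+1 < n.+1)%N by [].
  rewrite exprS -mulmxE -mulmxA mxE (bigD1 (Ordinal Hi')) //=.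
  rewrite big1 => [|j Hj]; last first.
    rewrite [CC a _ _]mxE eqSS (ltn_eqF Hi).
    case: eqP => [E|]; last by rewrite mul0r.
    by rewrite -val_eqE /= E eqxx in Hj.
  rewrite addr0 [CC a _ _]mxE /= eqSS (ltn_eqF Hi) eqxx mul1r IH /=.
  by rewrite addSnnS.
have -> : i = ord_max by apply: val_inj => /=; have := ltn_ord i; lia.
rewrite /g /= ifF; last by lia.
by rewrite addnK.
Qed.

Lemma grec k : g (n + k.+1) = - \sum_(i < n.+1) a 0 i * g (n + k - i).
Proof.
have := entries k.+1 ord_max; rewrite /= addnC => <-.
rewrite exprS -mulmxE -mulmxA mxE.
rewrite (reindex_inj (@rev_ord_inj _)) /= -sumrN; apply: eq_bigr => i _.
rewrite entries [CC a _ _]mxE /= eqxx rev_ordK /= mulNr; congr (- (_ * g _)).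
have := ltn_ord i; lia.
Qed.

Lemma g_small m : (m < n)%N -> g m = 0.
Proof. by move=> Hm; rewrite /g ltnW // ltn_eqF. Qed.

Lemma g_n : g n = 1.
Proof. by rewrite /g leqnn eqxx. Qed.

End Mat.
Arguments g {R n} a m.
Arguments entries {R n} a k i.
Arguments grec {R n} a k.
Arguments g_small {R n} a [m].
Arguments g_n {R n} a.
Section Seq.
Variable R : realType.
Variable n : nat.
Variable a : 'rV[R]_n.+1.
Variable alpha : R.
Hypothesis alpha0 : 0 < alpha.

Definition bb (i : nat) : R := (if i is i'.+1 then a 0 (inord i') else 1) * alpha ^- i.
Definition uu (k : nat) : R := g a (n + k) * alpha ^- k.

Lemma D0 k : \sum_(i < n.+2) (if (i <= k)%N then bb i * uu (k - i) else 0) = (k == 0%N)%:R.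
Proof.
case: k => [|k].
  rewrite big_ord_recl /= big1 ?addr0 => [|i _] //.
  by rewrite /bb /uu addn0 g_n expr0 invr1 !mulr1.
rewrite big_ord_recl /= subn0.
have T : forall i : 'I_n.+1,
  (if (i.+1 <= k.+1)%N then bb i.+1 * uu (k.+1 - i.+1) else 0) =
  alpha ^- k.+1 * (a 0 i * g a (n + k - i)).
  move=> i; case: (leqP i.+1 k.+1) => H.
    rewrite /bb /uu inord_val subSS.
    have -> : (n + (k - i) = n + k - i)%N by rewrite addnBA.
    have E : alpha ^- i.+1 * alpha ^- (k - i) = alpha ^- k.+1.
      by rewrite -invfM -exprD; congr (_ ^- _); lia.
    by rewrite -E; ring.
  rewrite g_small ?mulr0 //.
  have := ltn_ord i; lia.
rewrite (eq_bigr (fun i : 'I_n.+1 => alpha ^- k.+1 * (a 0 i * g a (n + k - i)))); last first.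
  by move=> i _; exact: T i.
rewrite -mulr_sumr.
rewrite /bb /uu expr0 invr1 mulr1 mul1r grec; ring.
Qed.

Lemma conv_id L : (0 < L)%N ->
  \sum_(i < n.+2) \sum_(k < L) \sum_(j < L)
     (if (k == (i + j)%N :> nat) then bb i * uu k * uu j else 0) = 1.
Proof.
move=> L0.
have D : forall k, (k < L)%N ->
  \sum_(i < n.+2) \sum_(j < L) (if (k == (i + j)%N :> nat) then bb i * uu j else 0)
  = (k == 0%N)%:R.
  move=> k kL; rewrite -D0; apply: eq_bigr => i _.
  case: (leqP i k) => Hik.
    have Hj : (k - i < L)%N by lia.
    rewrite (bigD1 (Ordinal Hj)) //= subnKC // eqxx big1 ?addr0 // => j Hj'.
    case: eqP => // E; move: Hj'; rewrite -val_eqE /= E.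
    by rewrite addKn eqxx.
  by rewrite big1 // => j _; case: eqP => //; lia.
rewrite exchange_big /=.
rewrite (eq_bigr (fun k : 'I_L => uu k * (k == 0%N :> nat)%:R)); last first.
  move=> k _; rewrite -(D k (ltn_ord k)) mulr_sumr; apply: eq_bigr => i _.
  rewrite mulr_sumr; apply: eq_bigr => j _.
  by case: ifP => _; [rewrite -mulrA mulrCA | rewrite mulr0].
clear D; case: L L0 => [//|L] _.
rewrite big_ord_recl /= big1 ?addr0 => [|i _]; last by rewrite mulr0.
by rewrite /uu addn0 g_n expr0 invr1 !mulr1.
Qed.


Lemma pc_eq (v : R[i]) : `|v| = 1 ->
  Pc (n.+2) bb v = p_a a ((alpha%:C)%C * conjc v) / ((alpha%:C)%C * conjc v) ^+ n.+1.
Proof.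
move=> hv.
have vv : v * conjc v = 1 by rewrite -sqr_normc hv expr1n.
have a0 : (alpha%:C)%C != 0 :> R[i].
  by apply/eqP => /(congr1 (@complex.Re R)) /= E; move: alpha0; rewrite E ltxx.
have cv0 : conjc v != 0.
  by apply/eqP => E; move: vv; rewrite E mulr0 => /eqP; rewrite eq_sym oner_eq0.
set z := (alpha%:C)%C * conjc v.
have z0 : z != 0 by rewrite mulf_neq0.
have zi : z^-1 = ((alpha^-1)%:C)%C * v.
  apply: (mulfI z0); rewrite mulfV // /z mulrACA -rmorphM /= mulfV ?gt_eqF //.
  by rewrite rmorph1 mul1r mulrC vv.
rewrite /p_a /Pc big_ord_recl /= mulrDl divff ?expf_neq0 //.
have -> : ((bb 0)%:C)%C * v ^+ 0 = 1.
  by rewrite expr0 mulr1 /bb expr0 invr1 mulr1.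
congr (1 + _).
rewrite mulr_suml; apply: eq_bigr => i _.
rewrite /bump /= add1n /bb inord_val.
rewrite (exprB (ltn_ord i)) ?unitfE ?z0 // mulrA.
rewrite mulrAC -(mulrA ((a 0 i)%:C)%C) divff ?expf_neq0 // mulr1.
rewrite -exprVn zi exprMn fmorphV /= exprVn rmorphM /= fmorphV /= rmorphXn /= mulrA.
by [].
Qed.

Lemma ubound (tau0 tau1 tau2 : R) : B_alpha tau0 tau1 tau2 alpha a ->
  forall L, tau1 * \sum_(k < L) uu k ^+ 2 <= 1.
Proof.
move=> HB L.
case: L => [|L]; first by rewrite big_ord0 mulr0 ler01.
rewrite -(@conv_id L.+1) //.
apply: (@toeplitz R (n.+2) L.+1 bb uu tau1) => v hv.
rewrite pc_eq //.
have hz : `|(alpha%:C)%C * conjc v| = (alpha%:C)%C.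
  by rewrite normrM normcJ hv mulr1 ger0_norm // ler0c ltW.
have [_ [H _]] := HB _ hz.
exact: ltW.
Qed.


Variables tau0 tau1 tau2 : R.
Hypothesis t1 : 0 < tau1.
Hypothesis a1 : alpha <= 1.
Hypothesis HB : B_alpha tau0 tau1 tau2 alpha a.

Lemma t1le1 : tau1 <= 1.
Proof.
have := @ubound tau0 tau1 tau2 HB 1; rewrite big_ord1 /uu addn0 g_n expr0 invr1 mulr1 expr1n.
by rewrite mulr1.
Qed.

Lemma Ubound L : \sum_(k < L) uu k ^+ 2 <= 1 / tau1 ^+ 2.
Proof.
have := @ubound tau0 tau1 tau2 HB L; have := t1le1.
have : 0 <= \sum_(k < L) uu k ^+ 2 by apply: sumr_ge0 => k _; exact: sqr_ge0.
set S := \sum_(k < L) uu k ^+ 2 => S0 t11 H.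
rewrite ler_pdivlMr ?exprn_gt0 // expr2; have := t1; nra.
Qed.

Lemma uu_le k : uu k ^+ 2 <= 1 / tau1 ^+ 2.
Proof.
apply: le_trans (Ubound k.+1); rewrite big_ord_recr /= lerDr.
by apply: sumr_ge0 => j _; exact: sqr_ge0.
Qed.

Lemma a0 : alpha != 0. Proof. by rewrite gt_eqF. Qed.

Lemma g_uu k : g a (n + k) = uu k * alpha ^+ k.
Proof. by rewrite /uu -mulrA mulVf ?expf_neq0 ?a0 // mulr1. Qed.

Lemma gbound m :
  g a m ^+ 2 <= alpha ^+ (2 * m) * alpha ^- (2 * n) / tau1 ^+ 2 /\
  g a m ^+ 2 <= 1 / tau1 ^+ 2.
Proof.
have al0 : 0 <= alpha by exact: ltW.
case: (ltnP m n) => Hm.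
  rewrite g_small // expr0n /=; split.
    by rewrite divr_ge0 ?mulr_ge0 ?invr_ge0 ?exprn_ge0 // ltW.
  by rewrite divr_ge0 ?exprn_ge0 // ltW.
rewrite -(subnKC Hm) g_uu; set k := (m - n)%N.
rewrite exprMn -exprM mulnC.
have U := uu_le k.
have P1 : alpha ^+ (2 * k) <= 1 by rewrite exprn_ile1 ?ler0 //.
split.
  have -> : alpha ^+ (2 * (n + k)) * alpha ^- (2 * n) = alpha ^+ (2 * k).
    by rewrite mulnDr exprD mulrAC divff ?expf_neq0 ?a0 // mul1r.
  rewrite mulrC ler_wpM2l ?(exprn_ge0 _ al0) //.
  by move: U; rewrite mul1r.
apply: le_trans U; rewrite ler_piMr ?sqr_ge0 //.
Qed.

Definition ff (m : nat) : R := g a m ^+ 2 / alpha ^+ (2 * m).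

Lemma ff_ge0 m : 0 <= ff m.
Proof. by rewrite /ff divr_ge0 ?sqr_ge0 ?exprn_ge0 // ltW. Qed.

Lemma Fshift i L : \sum_(k < L) ff (i + k) <= \sum_(m < i + L) ff m.
Proof.
rewrite big_split_ord /= lerDr; apply: sumr_ge0 => j _; exact: ff_ge0.
Qed.

Lemma Fbound P : \sum_(m < P) ff m <= alpha ^- (2 * n) / tau1 ^+ 2.
Proof.
apply: (@le_trans _ _ (\sum_(m < P + n) ff m)).
  by rewrite big_split_ord /= lerDl; apply: sumr_ge0 => j _; exact: ff_ge0.
rewrite -(big_mkord xpredT ff) addnC big_mkord big_split_ord /=.
rewrite big1 ?add0r => [|j _]; last by rewrite /ff g_small ?expr0n ?mul0r.
apply: (@le_trans _ _ (alpha ^- (2 * n) * \sum_(j < P) uu j ^+ 2)).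
  rewrite mulr_sumr; apply: ler_sum => j _.
  rewrite /ff g_uu exprMn -exprM (mulnC j 2%N) mulnDr exprD.
  rewrite le_eqVlt; apply/orP; left; apply/eqP.
  have A0 : alpha ^+ (2 * j) != 0 by rewrite expf_neq0 ?a0.
  have B0 : alpha ^+ (2 * n) != 0 by rewrite expf_neq0 ?a0.
  by field; rewrite A0 B0.
rewrite ler_wpM2l ?invr_ge0 ?exprn_ge0 ?(ltW alpha0) //.
by move: (Ubound P); rewrite mul1r.
Qed.

End Seq.

Theorem lemma4p4 (R : realType) (n : nat) (tau0 tau1 tau2 alpha : R)
  (a : 'rV[R]_n.+1) :
  0 < tau0 -> 0 < tau1 -> 0 < tau2 -> 0 < alpha -> alpha <= 1 ->
  B_alpha tau0 tau1 tau2 alpha a ->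
  ((\sum_(0 <= k <oo)
      ((enorm ((alpha ^- k) *: (CC a ^+ k *m e_last R n))) ^+ 2)%:E
    <= (2 * pi * n.+1%:R * alpha ^- (2 * n.+1) / tau1 ^+ 2)%:E)%E
  /\ forall k : nat,
      enorm (CC a ^+ k *m e_last R n) ^+ 2
      <= Num.min (2 * pi * n.+1%:R / tau1 ^+ 2)
                 (2 * pi * n.+1%:R * alpha ^+ (2 * k) * alpha ^- (2 * n.+1)
                    / tau1 ^+ 2)).
Proof.
move=> t0 t1 t2 al0 al1 HB.
have al0' : 0 <= alpha := ltW al0.
have aa0 : alpha != 0 by rewrite gt_eqF.
have en : forall k, enorm (CC a ^+ k *m e_last R n) ^+ 2 =
    \sum_(i < n.+1) g a (k + i) ^+ 2.
  move=> k; rewrite /enorm sqr_sqrtr; last by apply: sumr_ge0 => i _; exact: sqr_ge0.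
  by apply: eq_bigr => i _; rewrite entries.
have en2 : forall k,
    enorm (alpha ^- k *: (CC a ^+ k *m e_last R n)) ^+ 2 =
    \sum_(i < n.+1) alpha ^- (2 * k) * g a (k + i) ^+ 2.
  move=> k; rewrite /enorm sqr_sqrtr; last by apply: sumr_ge0 => i _; exact: sqr_ge0.
  apply: eq_bigr => i _; rewrite mxE entries exprMn exprVn -exprM mulnC.
  by [].
have pi1 : 1 <= 2 * pi :> R.
  have := pi_ge2 R; lra.
have invle : alpha ^- (2 * n) <= alpha ^- (2 * n.+1).
  rewrite lef_pV2 ?posrE ?exprn_gt0 //.
  by apply: ler_wiXn2l => //; lia.
have T0 : 0 <= (tau1 ^+ 2)^-1 by rewrite invr_ge0 exprn_ge0 // ltW.
split.
  apply: lime_le; first by apply: is_cvg_nneseries => k _ _; rewrite lee_fin sqr_ge0.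
  apply: nearW => L; rewrite sumEFin lee_fin big_mkord.
  under eq_bigr do rewrite en2.
  rewrite exchange_big /=.
  apply: (@le_trans _ _ (\sum_(i < n.+1) alpha ^- (2 * n) / tau1 ^+ 2)).
    apply: ler_sum => i _.
    have -> : \sum_(k < L) alpha ^- (2 * k) * g a (k + i) ^+ 2 =
        alpha ^+ (2 * i) * \sum_(k < L) ff R n a alpha (i + k).
      rewrite mulr_sumr; apply: eq_bigr => k _.
      rewrite /ff addnC mulnDr exprD.
      have A0 : alpha ^+ (2 * i) != 0 by rewrite expf_neq0.
      have B0 : alpha ^+ (2 * k) != 0 by rewrite expf_neq0.
      by field; rewrite A0 B0.
    apply: (@le_trans _ _ (1 * (alpha ^- (2 * n) / tau1 ^+ 2))); last by rewrite mul1r.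
    apply: ler_pM; first exact: exprn_ge0.
    - by apply: sumr_ge0 => k _; exact: (@ff_ge0 R n a alpha al0).
    - exact: exprn_ile1.
    apply: (le_trans (Fshift R n a alpha al0 i L)).
    exact: (@Fbound R n a alpha al0 tau0 tau1 tau2 t1 HB (i + L)).
    have -> : 2 * pi * n.+1%:R * alpha ^- (2 * n.+1) / tau1 ^+ 2 =
     (2 * pi) * (n.+1%:R * (alpha ^- (2 * n.+1) * (tau1 ^+ 2)^-1)) by ring.
rewrite sumr_const card_ord -[X in X <= _]mulr_natl.
  apply: (@le_trans _ _ (n.+1%:R * (alpha ^- (2 * n.+1) * (tau1 ^+ 2)^-1))).
    by rewrite ler_wpM2l ?ler0n // ler_wpM2r.
  apply: ler_peMl => //.
  by rewrite mulr_ge0 ?ler0n // mulr_ge0 // invr_ge0 exprn_ge0.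
move=> k; rewrite le_min en; apply/andP; split.
  apply: (@le_trans _ _ (\sum_(i < n.+1) 1 / tau1 ^+ 2)).
    by apply: ler_sum => i _; case: (@gbound R n a alpha al0 tau0 tau1 tau2 t1 al1 HB (k + i)).
    have -> : 2 * pi * n.+1%:R / tau1 ^+ 2 =
     (2 * pi) * (n.+1%:R * (1 / tau1 ^+ 2)) by ring.
rewrite sumr_const card_ord -[X in X <= _]mulr_natl.
  apply: ler_peMl => //.
  by rewrite mulr_ge0 ?ler0n // mul1r.
apply: (@le_trans _ _
   (\sum_(i < n.+1) alpha ^+ (2 * k) * alpha ^- (2 * n.+1) / tau1 ^+ 2)).
  apply: ler_sum => i _.
  case: (@gbound R n a alpha al0 tau0 tau1 tau2 t1 al1 HB (k + i)) => H _; apply: le_trans H _.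
  apply: ler_wpM2r => //; apply: ler_pM => //.
  - exact: exprn_ge0.
  - by rewrite invr_ge0 exprn_ge0.
  - by apply: ler_wiXn2l => //; lia.
have -> : 2 * pi * n.+1%:R * alpha ^+ (2 * k) * alpha ^- (2 * n.+1) / tau1 ^+ 2 =
   (2 * pi) * (n.+1%:R * (alpha ^+ (2 * k) * alpha ^- (2 * n.+1) / tau1 ^+ 2)) by ring.
rewrite sumr_const card_ord -[X in X <= _]mulr_natl.
apply: ler_peMl => //.
rewrite mulr_ge0 ?ler0n // mulr_ge0 // mulr_ge0 ?exprn_ge0 //.
by rewrite invr_ge0 exprn_ge0.
Qed.
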